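(* Let $p\ge 2$ and let $\Theta$ be a $p\times p$ correlation matrix (real symmetric positive semi-definite with unit diagonal). For $\alpha\in(0,\infty)^p$ define the $p\times p$ matrix $g(\Theta,\alpha)$ by $g_{ij}(\Theta,\alpha)=\Theta_{ij}\alpha_i\alpha_j$ for $i\neq j$ and $g_{ii}(\Theta,\alpha)=1$. Let $e^{(1)},\dots,e^{(p)}$ be the standard basis vectors of $\mathbb{R}^p$, let $\tilde m$ be the number of pairs $1\le i<j\le p$ with $\Theta_{ij}\neq 0$, and let $A$ be the $\tilde m\times p$ matrix whose rows are the vectors $e^{(i)}+e^{(j)}$ (as row vectors), one for each pair $i<j$ with $\Theta_{ij}\neq 0$. If $A$ has rank $p$, then the model is identifiable at $\Theta$: for any $\alpha,\beta\in(0,\infty)^p$ and any $p\times p$ correlation matrix $\Theta'$, if $\Theta'=\Theta$ and $g(\Theta',\beta)=g(\Theta,\alpha)$, then $\alpha=\beta$. Equivalently, the map $(\Theta,\alpha)\mapsto(\Theta,g(\Theta,\alpha))$ is injective in $\alpha\in(0,\infty)^p$ for every such $\Theta$.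
   Context: In the two-population model, one population of correlation matrices has expected value $\Theta$ and the other has expected value $g(\Theta,\alpha)$ (the multiplicative link function); identifiability means the pair of expected values $(\Theta, g(\Theta,\alpha))$ determines $(\Theta,\alpha)$. *)

(* Defs.v *)
From mathcomp Require Import all_boot all_order all_algebra.
Set Implicit Arguments. Unset Strict Implicit. Unset Printing Implicit Defensive.
Import Order.TTheory GRing.Theory Num.Theory.
Local Open Scope ring_scope.

Definition is_correlation (R : realFieldType) (p : nat) (T : 'M[R]_p) : Prop :=
  [/\ T^T = T,
      (forall v : 'cV[R]_p, 0 <= (v^T *m T *m v) 0 0)
    & (forall i : 'I_p, T i i = 1)].

Definition link_g (R : realFieldType) (p : nat) (T : 'M[R]_p) (a : 'rV[R]_p)
  : 'M[R]_p :=
  \matrix_(i, j) (if i == j then 1 else T i j * a 0 i * a 0 j).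

Definition nz_pairs (R : realFieldType) (p : nat) (T : 'M[R]_p)
  : {set 'I_p * 'I_p} :=
  [set ij : 'I_p * 'I_p | (ij.1 < ij.2)%N && (T ij.1 ij.2 != 0)].

Definition pair_matrix (R : realFieldType) (p : nat) (T : 'M[R]_p)
  : 'M[R]_(#|nz_pairs T|, p) :=
  \matrix_(k, l) (((enum_val k).1 == l)%:R + ((enum_val k).2 == l)%:R).

(* Main.v *)
Require Import Defs.
From mathcomp Require Import all_boot all_order all_algebra.
From mathcomp Require Import lra.
Import Order.TTheory GRing.Theory Num.Theory.
Local Open Scope ring_scope.
Lemma sg_pair (R : realFieldType) (a1 a2 b1 b2 : R) : 0 < a1 -> 0 < a2 -> 0 < b1 -> 0 < b2 ->
  b1 * b2 = a1 * a2 -> Num.sg (a1 - b1) + Num.sg (a2 - b2) = 0.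
Proof.
move=> h1 h2 h3 h4 e.
have k1 : a1 < b1 -> b2 < a2.
  move=> c; have : a1 * a2 < b1 * a2 by rewrite ltr_pM2r.
  by rewrite -e ltr_pM2l.
have k2 : b1 < a1 -> a2 < b2.
  move=> c; have : b1 * a2 < a1 * a2 by rewrite ltr_pM2r.
  by rewrite -e ltr_pM2l.
have k3 : a1 = b1 -> a2 = b2.
  by move=> c; subst; move/mulfI: e => ->//; rewrite gt_eqF.
case: (ltrgtP a1 b1) => c1.
- have c2 := k1 c1. rewrite ltr0_sg ?subr_lt0 // gtr0_sg ?subr_gt0 //. by rewrite addNr.
- have c2 := k2 c1. rewrite gtr0_sg ?subr_gt0 // ltr0_sg ?subr_lt0 //. by rewrite addrN.
- by rewrite (k3 c1) c1 !subrr sgr0 addr0.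
Qed.
Theorem mainTheorem2 (R : realFieldType) (p : nat) (Theta : 'M[R]_p) :
  (2 <= p)%N ->
  is_correlation Theta ->
  \rank (pair_matrix Theta) = p ->
  forall (alpha beta : 'rV[R]_p) (Theta' : 'M[R]_p),
    (forall i, 0 < alpha 0 i) -> (forall i, 0 < beta 0 i) ->
    is_correlation Theta' ->
    Theta' = Theta ->
    link_g Theta' beta = link_g Theta alpha ->
    alpha = beta.
Proof.
move=> _ _ rk alpha beta Th' ha hb _ -> eg.
set A := pair_matrix Theta.
pose v : 'rV[R]_p := \row_i Num.sg (alpha 0 i - beta 0 i).
have rf : row_free A^T by rewrite /row_free mxrank_tr rk.
have v0 : v = 0.
  apply: (row_free_inj rf); rewrite mul0mx; apply/matrixP => i k.
  rewrite !mxE.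
  have := enum_valP k; rewrite inE => /andP [lt nz].
  set i1 := (enum_val k).1 in lt nz *; set i2 := (enum_val k).2 in lt nz *.
  have ne : i1 != i2 by rewrite neq_ltn lt.
  under eq_bigr => l _ do rewrite !mxE mulrDr.
  rewrite big_split /=.
  rewrite (bigD1 i1) //= big1 => [|l /negbTE hl]; last by rewrite eq_sym hl mulr0.
  rewrite (bigD1 i2) //= big1 => [|l /negbTE hl]; last by rewrite eq_sym hl mulr0.
  rewrite !eqxx !mulr1 !addr0 ?mxE.
  idtac.
  apply: sg_pair => //.
  have := congr1 (fun M : 'M[R]_p => M i1 i2) eg; rewrite !mxE (negbTE ne).
  by rewrite -!mulrA => /mulfI; apply.
apply/rowP => i; have := congr1 (fun M : 'rV[R]_p => M 0 i) v0; rewrite !mxE.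
by move/eqP; rewrite sgr_eq0 subr_eq0 => /eqP.
Qed.
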